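(* Let $S$ be a semiring. If $\mathcal{A}=(A,X,Y,a_0,\delta,\omega)$ is a crisp-deterministic Mealy-type weighted automaton over $S$, then $[\![\mathcal{A}]\!]_{cd}=[\![\mathcal{A}]\!]_{1n}=[\![\mathcal{A}]\!]_{n1}=[\![\mathcal{A}]\!]_s$. If $\mathcal{A}=(A,X,Y,a_0,\delta,\omega)$ is a crisp-deterministic Moore-type weighted automaton over $S$, then $[\![\mathcal{A}]\!]_{cd}=[\![\mathcal{A}]\!]_{1n}=[\![\mathcal{A}]\!]_{n1}$.
   Context: A semiring $(S,+,\cdot,0,1)$ is a set with $(S,+,0)$ a commutative monoid, $(S,\cdot,1)$ a monoid (not necessarily commutative), $\cdot$ distributing over $+$ on both sides, and $0\cdot s=s\cdot 0=0$. $(X\times Y)^*$ is identified with pairs $(u,v)\in X^*\times Y^*$ with $|u|=|v|$; empty element $(\varepsilon,\varepsilon)$. $A,X,Y$ are finite nonempty sets. A crisp-deterministic Mealy-type (resp. Moore-type) weighted automaton is $\mathcal{A}=(A,X,Y,a_0,\delta,\omega)$ with $a_0\in A$, a transition function $\delta:A\times X\to A$, and $\omega:A\times X\times Y\to S$ (resp. $\omega:A\times Y\to S$). Write $\delta_x(a)=\delta(a,x)$, $\delta_\varepsilon(a)=a$, $\delta_{wx}(a)=\delta_x(\delta_w(a))$, and $\omega_{x,y}(a)=\omega(a,x,y)$ (resp. $\omega_y(a)=\omega(a,y)$). It is regarded as a general weighted automaton with initial weight vector $\sigma(a_0)=1$, $\sigma(a)=0$ for $a\ne a_0$, and weighted transitions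 $\hat\delta_x(a,b)=1$ if $b=\delta(a,x)$ and $0$ otherwise; for $w=z_1\cdots z_m\in X^+$ put $\hat\delta_w=\hat\delta_{z_1}\cdots\hat\delta_{z_m}$ (matrix product over $S$). cd-behavior: $[\![\mathcal{A}]\!]_{cd}(\varepsilon,\varepsilon)=1$ and for $u=x_1\cdots x_n$, $v=y_1\cdots y_n$, $n\ge1$: in the Mealy case $[\![\mathcal{A}]\!]_{cd}(u,v)=\omega_{x_1,y_1}(a_0)\cdot\omega_{x_2,y_2}(\delta_{x_1}(a_0))\cdots\omega_{x_n,y_n}(\delta_{x_1\cdots x_{n-1}}(a_0))$; in the Moore case $[\![\mathcal{A}]\!]_{cd}(u,v)=\omega_{y_1}(\delta_{x_1}(a_0))\cdot\omega_{y_2}(\delta_{x_1x_2}(a_0))\cdots\omega_{y_n}(\delta_{x_1\cdots x_n}(a_0))$. All of the following behaviors take value $\sum_{a\in A}\sigma(a)$ at $(\varepsilon,\varepsilon)$; for $u=x_1\cdots x_n$, $v=y_1\cdots y_n$, $n\ge1$: Mealy $1n$: $\sum_{(a_0',\dots,a_{n-1}')\in A^n}\sigma(a_0')\omega_{x_1,y_1}(a_0')\hat\delta_{x_1}(a_0',a_1')\omega_{x_2,y_2}(a_1')\cdots\hat\delta_{x_{n-1}}(a_{n-2}',a_{n-1}')\omega_{x_n,y_n}(a_{n-1}')$. Mealy $n1$: $\sum_{(a_0',\dots,a_{n-1}')\in A^n}\sigma(a_0')\omega_{x_1,y_1}(a_0')\hat\delta_{x_1}(a_0',a_1')\omega_{x_2,y_2}(a_1')\hat\delta_{x_1x_2}(a_0',a_2')\omega_{x_3,y_3}(a_2')\cdots\hat\delta_{x_1\cdots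 x_{n-1}}(a_0',a_{n-1}')\omega_{x_n,y_n}(a_{n-1}')$. Mealy sequential $s$: $\sum_{(a_0',\dots,a_n')\in A^{n+1}}\sigma(a_0')\omega_{x_1,y_1}(a_0')\hat\delta_{x_1}(a_0',a_1')\cdots\omega_{x_n,y_n}(a_{n-1}')\hat\delta_{x_n}(a_{n-1}',a_n')$. Moore $1n$: $\sum_{(a_0',\dots,a_n')\in A^{n+1}}\sigma(a_0')\hat\delta_{x_1}(a_0',a_1')\omega_{y_1}(a_1')\cdots\hat\delta_{x_n}(a_{n-1}',a_n')\omega_{y_n}(a_n')$. Moore $n1$: $\sum_{(a_0',\dots,a_n')\in A^{n+1}}\sigma(a_0')\hat\delta_{x_1}(a_0',a_1')\omega_{y_1}(a_1')\hat\delta_{x_1x_2}(a_0',a_2')\omega_{y_2}(a_2')\cdots\hat\delta_{x_1\cdots x_n}(a_0',a_n')\omega_{y_n}(a_n')$. *)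

(* Defs.v *)
(* Semiring = GRing.PzSemiRing (possibly non-commutative, 0 = 1 allowed). *)
From HB Require Import structures.
From mathcomp Require Import all_boot all_order all_algebra.
Set Implicit Arguments.
Unset Strict Implicit.
Unset Printing Implicit Defensive.
Import GRing.Theory.
Local Open Scope ring_scope.

(* Words of (X x Y)^* are represented as w : seq (X * Y), i.e. the pair
   (u, v) = (map fst w, map snd w), which automatically have equal length.
   Letters are indexed from 0: x_{i+1} of the paper is [nth _ (map fst w) i]. *)

Section Automata.
Variables (S : pzSemiRingType) (A X Y : finType).

Definition delta_word (delta : A -> X -> A) (u : seq X) (a : A) : A :=
  foldl delta a u.

Definition sigma_cd (a0 : A) (a : A) : S := if a == a0 then 1 else 0.

Definition hatd (delta : A -> X -> A) (x : X) (a b : A) : S :=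
  if b == delta a x then 1 else 0.

Definition id_mxA (a b : A) : S := if a == b then 1 else 0.

Definition mxmulA (M N : A -> A -> S) (a b : A) : S := \sum_(c : A) M a c * N c b.

Definition hatd_word (delta : A -> X -> A) (u : seq X) : A -> A -> S :=
  foldr (fun x M => mxmulA (hatd delta x) M) id_mxA u.

Definition mealy_cd (a0 : A) (delta : A -> X -> A) (omega : A -> X -> Y -> S)
    (w : seq (X * Y)) : S :=
  match w with
  | [::] => 1
  | p :: _ =>
    let n := size w in
    let xs := map fst w in
    let x i := nth p.1 xs i in
    let y i := nth p.2 (map snd w) i in
    \prod_(0 <= i < n) omega (delta_word delta (take i xs) a0) (x i) (y i)
  end.

Definition mealy_1n (a0 : A) (delta : A -> X -> A) (omega : A -> X -> Y -> S)
    (w : seq (X * Y)) : S :=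
  match w with
  | [::] => \sum_(a : A) sigma_cd a0 a
  | p :: _ =>
    let n := size w in
    let xs := map fst w in
    let x i := nth p.1 xs i in
    let y i := nth p.2 (map snd w) i in
    \sum_(t : n.-tuple A)
      let s i := nth a0 t i in
      sigma_cd a0 (s 0%N)
      * (\prod_(0 <= i < n.-1)
           (omega (s i) (x i) (y i) * hatd delta (x i) (s i) (s i.+1)))
      * omega (s n.-1) (x n.-1) (y n.-1)
  end.

Definition mealy_n1 (a0 : A) (delta : A -> X -> A) (omega : A -> X -> Y -> S)
    (w : seq (X * Y)) : S :=
  match w with
  | [::] => \sum_(a : A) sigma_cd a0 a
  | p :: _ =>
    let n := size w in
    let xs := map fst w in
    let x i := nth p.1 xs i in
    let y i := nth p.2 (map snd w) i in
    \sum_(t : n.-tuple A)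
      let s i := nth a0 t i in
      sigma_cd a0 (s 0%N) * omega (s 0%N) (x 0%N) (y 0%N)
      * \prod_(1 <= i < n)
           (hatd_word delta (take i xs) (s 0%N) (s i) * omega (s i) (x i) (y i))
  end.

Definition mealy_s (a0 : A) (delta : A -> X -> A) (omega : A -> X -> Y -> S)
    (w : seq (X * Y)) : S :=
  match w with
  | [::] => \sum_(a : A) sigma_cd a0 a
  | p :: _ =>
    let n := size w in
    let xs := map fst w in
    let x i := nth p.1 xs i in
    let y i := nth p.2 (map snd w) i in
    \sum_(t : n.+1.-tuple A)
      let s i := nth a0 t i in
      sigma_cd a0 (s 0%N)
      * \prod_(0 <= i < n)
           (omega (s i) (x i) (y i) * hatd delta (x i) (s i) (s i.+1))
  end.

Definition moore_cd (a0 : A) (delta : A -> X -> A) (omega : A -> Y -> S)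
    (w : seq (X * Y)) : S :=
  match w with
  | [::] => 1
  | p :: _ =>
    let n := size w in
    let xs := map fst w in
    let y i := nth p.2 (map snd w) i in
    \prod_(0 <= i < n) omega (delta_word delta (take i.+1 xs) a0) (y i)
  end.

Definition moore_1n (a0 : A) (delta : A -> X -> A) (omega : A -> Y -> S)
    (w : seq (X * Y)) : S :=
  match w with
  | [::] => \sum_(a : A) sigma_cd a0 a
  | p :: _ =>
    let n := size w in
    let xs := map fst w in
    let x i := nth p.1 xs i in
    let y i := nth p.2 (map snd w) i in
    \sum_(t : n.+1.-tuple A)
      let s i := nth a0 t i in
      sigma_cd a0 (s 0%N)
      * \prod_(0 <= i < n)
           (hatd delta (x i) (s i) (s i.+1) * omega (s i.+1) (y i))
  end.

Definition moore_n1 (a0 : A) (delta : A -> X -> A) (omega : A -> Y -> S)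
    (w : seq (X * Y)) : S :=
  match w with
  | [::] => \sum_(a : A) sigma_cd a0 a
  | p :: _ =>
    let n := size w in
    let xs := map fst w in
    let y i := nth p.2 (map snd w) i in
    \sum_(t : n.+1.-tuple A)
      let s i := nth a0 t i in
      sigma_cd a0 (s 0%N)
      * \prod_(0 <= i < n)
           (hatd_word delta (take i.+1 xs) (s 0%N) (s i.+1) * omega (s i.+1) (y i))
  end.

End Automata.

(* Main.v *)
Require Import Defs.
From HB Require Import structures.
From mathcomp Require Import all_boot all_order all_algebra zify.
From Stdlib Require Import Lia.
Local Open Scope ring_scope.

Module Helpers.
Set Implicit Arguments. Unset Strict Implicit. Unset Printing Implicit Defensive.
Import GRing.Theory.
Local Open Scope ring_scope.

Section Aux.
Variables (S : pzSemiRingType) (A X : finType).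

Lemma sum_collapse m (t0 : m.-tuple A) (F : m.-tuple A -> S) :
  (forall t, t != t0 -> F t = 0) -> \sum_t F t = F t0.
Proof. by move=> H; rewrite (bigD1 t0) //= big1 ?addr0 // => t /H. Qed.

Lemma prod_zero lo n (F : nat -> S) k : (lo <= k < n)%N -> F k = 0 ->
  \prod_(lo <= j < n) F j = 0.
Proof.
case/andP=> lk kn Fk.
rewrite (big_cat_nat lk (ltnW kn)) /=.
rewrite (big_ltn kn).
by rewrite Fk mul0r mulr0.
Qed.

Lemma nth_tup (a0 : A) m (g : nat -> A) i : (i < m)%N ->
  nth a0 [tuple g i | i < m] i = g i.
Proof. by move=> hi; rewrite -[i]/(nat_of_ord (Ordinal hi)) nth_mktuple. Qed.

Lemma first_diff (a0 : A) m (t : m.-tuple A) (g : nat -> A) :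
  t != [tuple g i | i < m] ->
  exists i, [/\ (i < m)%N, nth a0 t i != g i & forall j, (j < i)%N -> nth a0 t j = g j].
Proof.
move=> ne.
have exP : exists i, (i < m)%N && (nth a0 t i != g i).
  case: (boolP [exists i : 'I_m, nth a0 t i != g i]) => [/existsP [i hi]|].
    by exists i; rewrite ltn_ord hi.
  move=> /existsPn H; case/eqP: ne; apply: eq_from_tnth => k.
  rewrite tnth_mktuple (tnth_nth a0); by move/negPn/eqP: (H k).
case: (ex_minnP exP) => i /andP[im nei] mn; exists i; split => // j ji.
apply/eqP; apply/negPn/negP => nej.
have := mn j; rewrite nej (ltn_trans ji im) => /(_ isT); by rewrite leqNgt ji.
Qed.

Lemma hatd_wordE (delta : A -> X -> A) u a b :
  hatd_word S delta u a b = if b == delta_word delta u a then 1 else 0.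
Proof.
elim: u a => [|x u IH] a /=; first by rewrite /id_mxA eq_sym.
rewrite /mxmulA (bigD1 (delta a x)) //= /hatd eqxx mul1r IH big1 ?addr0 //.
by move=> c /negbTE ->; rewrite mul0r.
Qed.

Lemma sigma_sum (a0 : A) : \sum_a sigma_cd S a0 a = 1.
Proof.
rewrite (bigD1 a0) //= /sigma_cd eqxx big1 ?addr0 //.
by move=> a /negbTE ->.
Qed.

End Aux.

Section Core.
Variables (S : pzSemiRingType) (A X : finType) (a0 : A) (delta : A -> X -> A).
Variables (xs : seq X) (x0 : X) (m : nat) (g : nat -> A).
Hypothesis hsize : size xs = m.+1.
Hypothesis gw : forall i, g i = delta_word delta (take i xs) a0.

Lemma g0 : g 0 = a0. Proof. by rewrite gw take0. Qed.
Lemma gS i : (i < m.+1)%N -> g i.+1 = delta (g i) (nth x0 xs i).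
Proof. by move=> hi; rewrite !gw (take_nth x0) ?hsize // /delta_word foldl_rcons. Qed.

Lemma core_m1n (W : nat -> A -> S) :
  \sum_(t : m.+1.-tuple A)
    (sigma_cd S a0 (nth a0 t 0) *
     \prod_(0 <= i < m) (W i (nth a0 t i) *
        hatd S delta (nth x0 xs i) (nth a0 t i) (nth a0 t i.+1)) *
     W m (nth a0 t m))
  = \prod_(0 <= i < m.+1) W i (g i).
Proof.
rewrite (sum_collapse (t0 := [tuple g i | i < m.+1])) => [|t ne].
  rewrite !nth_tup // g0 /sigma_cd eqxx mul1r big_nat_recr //=.
  congr (_ * _); apply: eq_big_nat => i /andP[_ hi].
  have h1 : (i < m.+1)%N := ltnW hi.
  have h2 : (i.+1 < m.+1)%N := hi.
  by rewrite (nth_tup _ _ h1) (nth_tup _ _ h2) /hatd (gS h1) eqxx mulr1.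
case: (first_diff a0 ne) => -[|j] [jm nej eqj].
  by rewrite g0 in nej; rewrite /sigma_cd (negbTE nej) !mul0r.
rewrite (@prod_zero _ 0 m _ j) ?mulr0 ?mul0r //.
have hj : (j < m.+1)%N by lia.
rewrite /hatd (eqj j) // -(gS hj) (negbTE nej) mulr0 //.
Qed.

Lemma core_ms (W : nat -> A -> S) :
  \sum_(t : m.+2.-tuple A)
    (sigma_cd S a0 (nth a0 t 0) *
     \prod_(0 <= i < m.+1) (W i (nth a0 t i) *
        hatd S delta (nth x0 xs i) (nth a0 t i) (nth a0 t i.+1)))
  = \prod_(0 <= i < m.+1) W i (g i).
Proof.
rewrite (sum_collapse (t0 := [tuple g i | i < m.+2])) => [|t ne].
  rewrite !nth_tup // g0 /sigma_cd eqxx mul1r.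
  apply: eq_big_nat => i /andP[_ hi].
  have h1 : (i < m.+2)%N := ltnW hi.
  have h2 : (i.+1 < m.+2)%N := hi.
  by rewrite (nth_tup _ _ h1) (nth_tup _ _ h2) /hatd (gS hi) eqxx mulr1.
case: (first_diff a0 ne) => -[|j] [jm nej eqj].
  by rewrite g0 in nej; rewrite /sigma_cd (negbTE nej) !mul0r.
rewrite (@prod_zero _ 0 m.+1 _ j) ?mulr0 ?mul0r //.
have hj : (j < m.+1)%N by lia.
rewrite /hatd (eqj j) // -(gS hj) (negbTE nej) mulr0 //.
Qed.

Lemma core_mn1 (W : nat -> A -> S) :
  \sum_(t : m.+1.-tuple A)
    (sigma_cd S a0 (nth a0 t 0) * W 0%N (nth a0 t 0) *
     \prod_(1 <= i < m.+1) (hatd_word S delta (take i xs) (nth a0 t 0) (nth a0 t i)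
        * W i (nth a0 t i)))
  = \prod_(0 <= i < m.+1) W i (g i).
Proof.
rewrite (sum_collapse (t0 := [tuple g i | i < m.+1])) => [|t ne].
  rewrite !nth_tup // g0 /sigma_cd eqxx mul1r [RHS]big_ltn // g0.
  congr (_ * _); apply: eq_big_nat => i /andP[_ hi].
  by rewrite !nth_tup // hatd_wordE -gw eqxx mul1r.
case: (first_diff a0 ne) => -[|j] [jm nej eqj].
  by rewrite g0 in nej; rewrite /sigma_cd (negbTE nej) !mul0r.
rewrite (@prod_zero _ 1 m.+1 _ j.+1) ?mulr0 ?mul0r //.
by rewrite hatd_wordE (eqj 0%N) // g0 -gw (negbTE nej) mul0r.
Qed.

Lemma core_o1n (V : nat -> A -> S) :
  \sum_(t : m.+2.-tuple A)
    (sigma_cd S a0 (nth a0 t 0) *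
     \prod_(0 <= i < m.+1) (hatd S delta (nth x0 xs i) (nth a0 t i) (nth a0 t i.+1)
        * V i (nth a0 t i.+1)))
  = \prod_(0 <= i < m.+1) V i (g i.+1).
Proof.
rewrite (sum_collapse (t0 := [tuple g i | i < m.+2])) => [|t ne].
  rewrite !nth_tup // g0 /sigma_cd eqxx mul1r.
  apply: eq_big_nat => i /andP[_ hi].
  have h1 : (i < m.+2)%N := ltnW hi.
  have h2 : (i.+1 < m.+2)%N := hi.
  by rewrite (nth_tup _ _ h1) (nth_tup _ _ h2) /hatd (gS hi) eqxx mul1r.
case: (first_diff a0 ne) => -[|j] [jm nej eqj].
  by rewrite g0 in nej; rewrite /sigma_cd (negbTE nej) !mul0r.
rewrite (@prod_zero _ 0 m.+1 _ j) ?mulr0 ?mul0r //.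
have hj : (j < m.+1)%N by lia.
rewrite /hatd (eqj j) // -(gS hj) (negbTE nej) mul0r //.
Qed.

Lemma core_on1 (V : nat -> A -> S) :
  \sum_(t : m.+2.-tuple A)
    (sigma_cd S a0 (nth a0 t 0) *
     \prod_(0 <= i < m.+1) (hatd_word S delta (take i.+1 xs) (nth a0 t 0) (nth a0 t i.+1)
        * V i (nth a0 t i.+1)))
  = \prod_(0 <= i < m.+1) V i (g i.+1).
Proof.
rewrite (sum_collapse (t0 := [tuple g i | i < m.+2])) => [|t ne].
  rewrite !nth_tup // g0 /sigma_cd eqxx mul1r.
  apply: eq_big_nat => i /andP[_ hi].
  by rewrite !nth_tup // hatd_wordE -gw eqxx mul1r.
case: (first_diff a0 ne) => -[|j] [jm nej eqj].
  by rewrite g0 in nej; rewrite /sigma_cd (negbTE nej) !mul0r.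
rewrite (@prod_zero _ 0 m.+1 _ j) ?mulr0 ?mul0r //.
by rewrite hatd_wordE (eqj 0%N) // g0 -gw (negbTE nej) mul0r.
Qed.

End Core.

End Helpers.
Import Helpers.
Import GRing.Theory.

Theorem theorem7 (S : pzSemiRingType) (A X Y : finType)
    (hX : (0 < #|X|)%N) (hY : (0 < #|Y|)%N) :
  (forall (a0 : A) (delta : A -> X -> A) (omega : A -> X -> Y -> S),
     forall w : seq (X * Y),
       mealy_cd a0 delta omega w = mealy_1n a0 delta omega w /\
       mealy_1n a0 delta omega w = mealy_n1 a0 delta omega w /\
       mealy_n1 a0 delta omega w = mealy_s a0 delta omega w) /\
  (forall (a0 : A) (delta : A -> X -> A) (omega : A -> Y -> S),
     forall w : seq (X * Y),
       moore_cd a0 delta omega w = moore_1n a0 delta omega w /\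
       moore_1n a0 delta omega w = moore_n1 a0 delta omega w).
Proof.
split.
- move=> a0 delta omega [|p w'].
    by rewrite /mealy_cd /mealy_1n /mealy_n1 /mealy_s sigma_sum.
  have hs : size (map fst (p :: w')) = (size w').+1 by rewrite size_map.
  pose g := fun i => delta_word delta (take i (map fst (p :: w'))) a0.
  have gw : forall i, g i = delta_word delta (take i (map fst (p :: w'))) a0 by [].
  pose W := fun i a => omega a (nth p.1 (map fst (p :: w')) i) (nth p.2 (map snd (p::w')) i).
  have e1 := core_m1n p.1 hs gw W.
  have e2 := core_mn1 (size w') gw W.
  have e3 := core_ms p.1 hs gw W.
  have e0 : mealy_cd a0 delta omega (p :: w') = \prod_(0 <= i < (size w').+1) W i (g i) by [].
  rewrite e0; split; first by symmetry; exact: e1.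
  split; first by transitivity (\prod_(0 <= i < (size w').+1) W i (g i)); [exact: e1 | symmetry; exact: e2].
  by transitivity (\prod_(0 <= i < (size w').+1) W i (g i)); [exact: e2 | symmetry; exact: e3].
- move=> a0 delta omega [|p w'].
    by rewrite /moore_cd /moore_1n /moore_n1 sigma_sum.
  have hs : size (map fst (p :: w')) = (size w').+1 by rewrite size_map.
  pose g := fun i => delta_word delta (take i (map fst (p :: w'))) a0.
  have gw : forall i, g i = delta_word delta (take i (map fst (p :: w'))) a0 by [].
  pose V := fun i a => omega a (nth p.2 (map snd (p::w')) i).
  have e1 := core_o1n p.1 hs gw V.
  have e2 := core_on1 (size w') gw V.
  have e0 : moore_cd a0 delta omega (p :: w') = \prod_(0 <= i < (size w').+1) V i (g i.+1) by [].
  rewrite e0; split; first by symmetry; exact: e1.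
  by transitivity (\prod_(0 <= i < (size w').+1) V i (g i.+1)); [exact: e1 | symmetry; exact: e2].
Qed.
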